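(* Let $k\ge2$. The graph $H_k$ has order $n=5k$, minimum degree $\delta(H_k)=2$, $\gamma_2(H_k)=\frac{3n}{5}$, and $\operatorname{ZIR}(H_k)=\frac{2n}{5}=n-\gamma_2(H_k)$. Furthermore, $\operatorname{Z}(H_k)=k+2$.
   Context: $H_k$ consists of $k$ disjoint 5-cycles, the $i$th with vertices $v_{i,1},\dots,v_{i,5}$ in cyclic order, together with edges $v_{i,3}v_{i+1,1}$ for $1\le i\le k-1$ and the edge $v_{k,3}v_{1,1}$. A 2-dominating set is a set $D$ such that every vertex not in $D$ has at least two neighbors in $D$; $\gamma_2$ is its minimum size. Zero forcing: a blue vertex $u$ changes a white vertex $w$ to blue if $w$ is the only white neighbor of $u$; $\operatorname{Z}(G)$ is the minimum size of a set of initially blue vertices from which all vertices eventually become blue. A nonempty $F\subseteq V(G)$ is a fort if every $v\notin F$ has $|N(v)\cap F|\ne1$. A private fort of $x\in S$ relative to $S$ is a fort $F$ with $S\cap F=\{x\}$; $S$ is a ZIr-set if every element of $S$ has a private fort. $\operatorname{ZIR}(G)$ is the maximum cardinality of an inclusion-maximal ZIr-set. *)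

(* Defs.v *)
(* Graphs are symmetric relations on a finType. *)
From mathcomp Require Import all_boot.
Set Implicit Arguments. Unset Strict Implicit. Unset Printing Implicit Defensive.

Section Graph.
Variables (T : finType) (adj : rel T).

Definition nbhd (v : T) : {set T} := [set u | adj v u].

Definition min_degree : nat := \big[minn/#|T|]_(v : T) #|nbhd v|.

Definition two_dominating (D : {set T}) : bool :=
  [forall v, (v \notin D) ==> (2 <= #|nbhd v :&: D|)].
Definition gamma2 : nat :=
  \big[minn/#|T|]_(D : {set T} | two_dominating D) #|D|.

Definition force_step (B B' : {set T}) : bool :=
  [exists u, exists w, [&& u \in B, w \notin B,
     nbhd u :&: ~: B == [set w] & B' == w |: B]].
Definition zero_forcing_set (S : {set T}) : bool :=
  connect force_step S [set: T].
Definition Zf : nat :=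
  \big[minn/#|T|]_(S : {set T} | zero_forcing_set S) #|S|.

Definition fort (F : {set T}) : bool :=
  (F != set0) && [forall v, (v \notin F) ==> (#|nbhd v :&: F| != 1)].
Definition private_fort (S : {set T}) (x : T) (F : {set T}) : bool :=
  fort F && (S :&: F == [set x]).
Definition ZIr_set (S : {set T}) : bool :=
  [forall x in S, exists F, private_fort S x F].
Definition ZIR : nat :=
  \max_(S : {set T} | maxset ZIr_set S) #|S|.
End Graph.

(* H_k: vertex (i, j) : 'I_k * 'I_5 stands for v_{i+1, j+1}. *)
Notation H_vertex k := ((ordinal k) * (ordinal 5))%type.
Definition H_edge_dir (k : nat) (x y : H_vertex k) : bool :=
  ((x.1 == y.1) && (val y.2 == (val x.2).+1 %% 5))
  || [&& val x.2 == 2, val y.2 == 0 & val y.1 == (val x.1).+1 %% k].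
Definition H_adj (k : nat) : rel (H_vertex k) :=
  fun x y => H_edge_dir x y || H_edge_dir y x.

(* Main.v *)
Require Import Defs.
From mathcomp Require Import all_boot zify.
Set Implicit Arguments. Unset Strict Implicit. Unset Printing Implicit Defensive.


Definition o0 : 'I_5 := @Ordinal 5 0 isT.
Definition o1 : 'I_5 := @Ordinal 5 1 isT.
Definition o2 : 'I_5 := @Ordinal 5 2 isT.
Definition o3 : 'I_5 := @Ordinal 5 3 isT.
Definition o4 : 'I_5 := @Ordinal 5 4 isT.

Lemma L5 (a b : 'I_5) : (val a == (val b + 5).-1 %% 5) = (val b == (val a).+1 %% 5).
Proof.
case: a => [[|[|[|[|[|a]]]]] Ha]; case: b => [[|[|[|[|[|b]]]]] Hb] //.
Qed.

Lemma Lk k (i i' : 'I_k) : (val i' == (val i + k).-1 %% k) = (val i == (val i').+1 %% k).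
Proof.
have -> : (val i' == (val i + k).-1 %% k) = (i' == ord_pred i) by [].
have -> : (val i == (val i').+1 %% k) = (i == ordS i') by [].
apply/eqP/eqP => [->|->]; [by rewrite ord_predK | by rewrite ordSK].
Qed.

Section H.
Variable k : nat.
Notation V := (H_vertex k).
Implicit Types (x y : V) (F : {set V}).

Lemma adjE x y : H_adj x y =
  [|| y == (x.1, ordS x.2), y == (x.1, ord_pred x.2),
      (x.2 == o2) && (y == (ordS x.1, o0)) | (x.2 == o0) && (y == (ord_pred x.1, o2))].
Proof.
case: x y => [i a] [i' b]; rewrite /H_adj /H_edge_dir /= !xpair_eqE.
rewrite -!(inj_eq val_inj) /= L5 (eq_sym (val i) (val i')) Lk.
case: (val i' == val i); case: (val b == (val a).+1 %% 5); case: (val a == (val b).+1 %% 5);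
  case: (val a == 2); case: (val b == 0); case: (val b == 2); case: (val a == 0);
  case: (val i' == (val i).+1 %% k); case: (val i == (val i').+1 %% k); by [].
Qed.
End H.


Section H.
Variable k : nat.
Notation V := (H_vertex k).
Implicit Types (x y : V) (F : {set V}).

Lemma sum_pred1_nat (u : V) (Q : V -> bool) :
  \sum_(y : V) (((y == u) && Q y) : nat) = Q u.
Proof.
rewrite (bigD1 u) //= eqxx /= big1 ?addn0 // => y /negbTE ->; by [].
Qed.

Lemma cntE F x : #|nbhd (@H_adj k) x :&: F| =
  ((x.1, ordS x.2) \in F) + ((x.1, ord_pred x.2) \in F)
  + ((x.2 == o2) && ((ordS x.1, o0) \in F)) + ((x.2 == o0) && ((ord_pred x.1, o2) \in F)).
Proof.
rewrite -sum1_card big_mkcond /=.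
have E y : (if y \in nbhd (@H_adj k) x :&: F then 1 else 0) =
   ((y == (x.1, ordS x.2)) && (y \in F)) + ((y == (x.1, ord_pred x.2)) && (y \in F))
   + ((y == (ordS x.1, o0)) && ((x.2 == o2) && (y \in F)))
   + ((y == (ord_pred x.1, o2)) && ((x.2 == o0) && (y \in F))).
  rewrite !inE adjE.
  case: x => i a; case: y => j b /=.
  case: ((j, b) \in F) => /=; last by rewrite !andbF.
  rewrite !xpair_eqE -!(inj_eq val_inj) /=.
  case: a => [[|[|[|[|[|a]]]]] Ha] //; case: b => [[|[|[|[|[|b]]]]] Hb] //=;
   case: (val j == val i); case: (val j == (val i).+1 %% k); 
   case: (val j == (val i + k).-1 %% k); by [].
rewrite (eq_bigr _ (fun y _ => E y)) !big_split /=.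
by rewrite !(sum_pred1_nat _ (fun y => _ && (y \in F))) (sum_pred1_nat _ (fun y => y \in F)) 
  (sum_pred1_nat _ (fun y => y \in F)).
Qed.
End H.


Fixpoint allseqs (n : nat) : seq (seq bool) :=
  if n is n'.+1 then [seq b :: s | b <- [:: true; false], s <- allseqs n'] else [:: [::]].

Lemma allseqsP n s : size s = n -> s \in allseqs n.
Proof.
elim: n s => [|n IH] [|b s] //= [/IH Hs].
by rewrite !mem_cat; case: b; rewrite (map_f _ Hs) ?orbT.
Qed.

Definition allbits n (P : seq bool -> bool) := all P (allseqs n).
Lemma allbitsP n P s : allbits n P -> size s = n -> P s.
Proof. by move/allP => H /allseqsP /H. Qed.

Definition lcount (s : seq bool) (al be : bool) (j : nat) : nat :=
  nth false s (j.+1 %% 5) + nth false s ((j + 5).-1 %% 5) + ((j == 2) && be) + ((j == 0) && al).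

Definition lfort s al be :=
  all (fun j => nth false s j || (lcount s al be j != 1)) (iota 0 5).
Definition l2dom s al be :=
  all (fun j => nth false s j || (2 <= lcount s al be j)) (iota 0 5).

Lemma iota5P (P : nat -> bool) : all P (iota 0 5) -> forall j : 'I_5, P j.
Proof. by move/allP => H j; apply: H; rewrite mem_iota /=. Qed.

Section H.
Variable k : nat.
Notation V := (H_vertex k).
Implicit Types (x y : V) (F : {set V}).

Definition bits F (i : 'I_k) : seq bool := [seq (i, j) \in F | j <- enum 'I_5].

Lemma size_bits F i : size (bits F i) = 5.
Proof. by rewrite size_map size_enum_ord. Qed.

Lemma nth_bits F i (j : 'I_5) : nth false (bits F i) j = ((i, j) \in F).
Proof. by rewrite (nth_map j) ?size_enum_ord // nth_ord_enum. Qed.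

Lemma bits_ext F i s : size s = 5 -> (forall j : 'I_5, (i, j) \in F = nth false s j) -> bits F i = s.
Proof.
move=> Hs H; apply: (@eq_from_nth _ false); rewrite ?size_bits ?Hs // => j Hj.
by rewrite -[j]/(val (Ordinal Hj)) nth_bits H.
Qed.

Lemma count_map_sum (T : Type) (s : seq T) (f : T -> bool) :
  count id (map f s) = \sum_(x <- s) (f x : nat).
Proof. by elim: s => [|x s IH]; rewrite ?big_nil ?big_cons //= IH. Qed.

Lemma card_bits F : #|F| = \sum_(i < k) count id (bits F i).
Proof.
rewrite -sum1_card big_mkcond /= (eq_bigr (fun p : V => if (p.1, p.2) \in F then 1 else 0)); last by case.
rewrite -(pair_bigA _ (fun i j => if (i, j) \in F then 1 else 0)) /=.
apply: eq_bigr => i _; rewrite /bits count_map_sum big_enum /=.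
by apply: eq_bigr => j _; case: ((i, j) \in F).
Qed.

Lemma cnt_local F (i : 'I_k) (j : 'I_5) :
  #|nbhd (@H_adj k) (i, j) :&: F| = lcount (bits F i) ((ord_pred i, o2) \in F) ((ordS i, o0) \in F) j.
Proof.
rewrite cntE /lcount /=.
rewrite -[_.+1 %% 5]/(val (ordS j)) -[(_ + 5).-1 %% 5]/(val (ord_pred j)) !nth_bits.
by [].
Qed.
End H.


Definition ABs := [:: (true,true);(true,false);(false,true);(false,false)].

Definition check_g2 := allbits 5 (fun s => all (fun ab => ~~ l2dom s ab.1 ab.2 || (3 <= count id s)) ABs).
Lemma check_g2_ok : check_g2. Proof. by vm_compute. Qed.

Definition GP := filter (fun p => has (fun ab => lfort (take 5 p) ab.1 (nth false p 5)
     && lfort (drop 5 p) (nth false p 2) ab.2) ABs) (allseqs 10).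

Definition checkZ := let gp := GP in allbits 5 (fun t1 => allbits 5 (fun t2 =>
  let t := t1 ++ t2 in (count id t <= 4) || has (fun x => nth false t x && all (fun p =>
     ~~ nth false p x || ~~ all (fun y => (y == x) || ~~ (nth false p y && nth false t y)) (iota 0 10)) gp) (iota 0 10))).
Lemma checkZ_ok : checkZ. Proof. by vm_compute. Qed.

Definition validpat (t p : seq bool) := [&& size p == 5, all (fun j => ~~ (nth false p j && nth false t j)) (iota 0 5), has id p,
   (count id t != 1) || [&& nth false p 0, nth false p 2 & all (fun ab => lfort p ab.1 ab.2) ABs] &
   (count id t != 2) || lfort p true true].
Definition pat t := head [::] (filter (validpat t) (allseqs 5)).
Definition hitB t := [|| nth false t 1, nth false t 3 | nth false t 4].
Definition checkZf := allbits 5 (fun t => ~~ hitB t || (2 < count id t) || validpat t (pat t)).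
Lemma checkZf_ok : checkZf. Proof. by vm_compute. Qed.


Section H.
Variable k : nat.
Notation V := (H_vertex k).
Implicit Types (x y : V) (F : {set V}).

Definition alF F (i : 'I_k) := (ord_pred i, o2) \in F.
Definition beF F (i : 'I_k) := (ordS i, o0) \in F.

Lemma fort_local F i : fort (@H_adj k) F -> lfort (bits F i) (alF F i) (beF F i).
Proof.
case/andP => _ /forallP H; apply/allP => j; rewrite mem_iota => /andP[_ Hj].
have := H (i, Ordinal Hj); rewrite -[j]/(val (Ordinal Hj)) nth_bits -cnt_local.
by case: ((i, Ordinal Hj) \in F).
Qed.

Lemma local_fort F : F != set0 -> (forall i, lfort (bits F i) (alF F i) (beF F i)) ->
  fort (@H_adj k) F.
Proof.
move=> HF H; apply/andP; split => //; apply/forallP => -[i j]; apply/implyP => Hn.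
by have := iota5P (H i) j; rewrite nth_bits cnt_local (negbTE Hn).
Qed.

Lemma twodom_local F i : two_dominating (@H_adj k) F -> l2dom (bits F i) (alF F i) (beF F i).
Proof.
move/forallP => H; apply/allP => j; rewrite mem_iota => /andP[_ Hj].
have := H (i, Ordinal Hj); rewrite -[j]/(val (Ordinal Hj)) nth_bits -cnt_local.
by case: ((i, Ordinal Hj) \in F).
Qed.

Lemma local_twodom F : (forall i, l2dom (bits F i) (alF F i) (beF F i)) ->
  two_dominating (@H_adj k) F.
Proof.
move=> H; apply/forallP => -[i j]; apply/implyP => Hn.
by have := iota5P (H i) j; rewrite nth_bits cnt_local (negbTE Hn).
Qed.

Definition mkset (P : 'I_k -> seq bool) : {set V} := [set x : V | nth false (P x.1) x.2].

Lemma bits_mkset P i : size (P i) = 5 -> bits (mkset P) i = P i.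
Proof. by move=> Hs; apply: bits_ext => // j; rewrite inE. Qed.

Lemma alF_mkset P i : alF (mkset P) i = nth false (P (ord_pred i)) 2.
Proof. by rewrite /alF inE. Qed.
Lemma beF_mkset P i : beF (mkset P) i = nth false (P (ordS i)) 0.
Proof. by rewrite /beF inE. Qed.

Lemma card_mkset P : (forall i, size (P i) = 5) -> #|mkset P| = \sum_(i < k) count id (P i).
Proof. by move=> Hs; rewrite card_bits; apply: eq_bigr => i _; rewrite bits_mkset. Qed.

Lemma abs_check (P : seq bool -> bool -> bool -> bool) s al be :
  all (fun ab => P s ab.1 ab.2) ABs -> P s al be.
Proof. by rewrite /= => /and5P[? ? ? ? _]; case: al; case: be. Qed.

Lemma cardV : #|{: V}| = 5 * k.
Proof. by rewrite card_prod !card_ord mulnC. Qed.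

Lemma g2_lower D : two_dominating (@H_adj k) D -> 3 * k <= #|D|.
Proof.
move=> HD; rewrite card_bits.
have -> : 3 * k = \sum_(i < k) 3 by rewrite sum_nat_const card_ord mulnC.
apply: leq_sum => i _; have H := allbitsP check_g2_ok (size_bits D i).
have := @abs_check (fun s a b => ~~ l2dom s a b || (3 <= count id s)) _ (alF D i) (beF D i) H.
by rewrite twodom_local.
Qed.

Lemma g2_upper_set : exists2 D, two_dominating (@H_adj k) D & #|D| = 3 * k.
Proof.
exists (mkset (fun _ => [:: true; false; true; false; true])).
  by apply: local_twodom => i; rewrite bits_mkset // alF_mkset beF_mkset.
by rewrite card_mkset // sum_nat_const card_ord mulnC.
Qed.

Lemma deg2 (v : V) : 2 <= #|nbhd (@H_adj k) v|.
Proof.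
case: v => i j; rewrite -(setIT (nbhd _ _)) cnt_local.
rewrite (bits_ext (s := [:: true; true; true; true; true])) // => [|j']; last by rewrite inE; case: j' => [[|[|[|[|[|]]]]] ?].
by rewrite /alF /beF !inE; case: j => [[|[|[|[|[|]]]]] ?].
Qed.

Lemma deg_b (i : 'I_k) : #|nbhd (@H_adj k) (i, o1)| = 2.
Proof.
rewrite -(setIT (nbhd _ _)) cnt_local.
rewrite (bits_ext (s := [:: true; true; true; true; true])) // => [j']; last by rewrite inE; case: j' => [[|[|[|[|[|]]]]] ?].
Qed.
End H.

Lemma bigmin_geq (T : finType) (P : pred T) (f : T -> nat) c d :
  c <= d -> (forall x, P x -> c <= f x) -> c <= \big[minn/d]_(x | P x) f x.
Proof.
move=> Hd H; apply: (big_ind (fun m => c <= m)) => // x y Hx Hy.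
by rewrite leq_min Hx Hy.
Qed.

Lemma bigmin_leq (T : finType) (P : pred T) (f : T -> nat) d x :
  P x -> \big[minn/d]_(x | P x) f x <= f x.
Proof.
move=> Px; have : x \in index_enum T by rewrite mem_index_enum.
elim: (index_enum T) => [|y r IH] //; rewrite inE big_cons => /orP[/eqP <-|/IH H].
  by rewrite Px geq_minl.
by case: (P y) => //; rewrite geq_min H orbT.
Qed.


Section H.
Variable k : nat.
Hypothesis hk : 1 < k.
Notation V := (H_vertex k).
Implicit Types (F : {set V}).

Lemma ordS_neq (m : 'I_k) : ordS m != m.
Proof.
rewrite -(inj_eq val_inj) /=; case: m => m Hm /=.
case: (ltngtP m.+1 k) => [H||H]; first by rewrite modn_small // (gtn_eqF (ltnSn m)).
  by rewrite ltnNge Hm.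
by rewrite H modnn eq_sym -lt0n -ltnS H.
Qed.

Definition vert (m : 'I_k) (y : nat) : V :=
  if y < 5 then (m, inord y) else (ordS m, inord (y - 5)).

Lemma nth_vert G m y : y < 10 ->
  nth false (bits G m ++ bits G (ordS m)) y = (vert m y \in G).
Proof.
move=> Hy; rewrite nth_cat size_bits /vert; case: ifP => H5.
  by rewrite -[y in nth _ _ y](@inordK 4 y) // nth_bits.
have H' : y - 5 < 5 by rewrite ltn_subLR // leqNgt H5.
by rewrite -[X in nth _ _ X](@inordK 4 (y - 5)) // nth_bits.
Qed.

Lemma vert_inj m y y' : y < 10 -> y' < 10 -> vert m y = vert m y' -> y = y'.
Proof.
move=> Hy Hy'; rewrite /vert.
case: ifP => H1; case: ifP => H2 => E.
- by case: E => /(f_equal (@nat_of_ord 5)); rewrite !inordK.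
- by case: E => E1; move: (ordS_neq m); rewrite -E1 eqxx.
- by case: E => E1; move: (ordS_neq m); rewrite E1 eqxx.
- have: y - 5 = y' - 5.
    by case: E => /(f_equal (@nat_of_ord 5)); rewrite !inordK // ltn_subLR // leqNgt ?H1 ?H2.
  by move/(f_equal (addn 5)); rewrite !subnKC // leqNgt ?H1 ?H2.
Qed.

Lemma zir_pair S m : ZIr_set (@H_adj k) S ->
  count id (bits S m) + count id (bits S (ordS m)) <= 4.
Proof.
move=> HS; rewrite leqNgt; apply/negP => Hgt.
have H1 := allbitsP checkZ_ok (size_bits S m).
have /orP[|] := allbitsP H1 (size_bits S (ordS m)).
  by rewrite count_cat leqNgt Hgt.
case/hasP => x; rewrite mem_iota => /andP[_ Hx] /andP[Htx Hall].
rewrite nth_vert // in Htx.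
have /existsP[F /andP[HF /eqP HSF]] := forall_inP HS _ Htx.
set p := bits F m ++ bits F (ordS m).
have HvF : vert m x \in F by have := set11 (vert m x); rewrite -HSF inE => /andP[].
have Hp : p \in GP.
  rewrite mem_filter allseqsP ?andbT; last by rewrite size_cat !size_bits.
  apply/hasP; exists (alF F m, beF F (ordS m)); first by rewrite /ABs /=; case: (alF F m); case: (beF F (ordS m)).
  have E5 : nth false p 5 = beF F m.
    by rewrite nth_cat size_bits ltnn subnn (nth_bits F (ordS m) o0).
  have E2 : nth false p 2 = alF F (ordS m).
    by rewrite nth_cat size_bits /= (nth_bits F m o2) /alF ordSK.
  rewrite /= E5 E2 /p take_size_cat ?size_bits // drop_size_cat ?size_bits //.
  by rewrite !fort_local.
case/orP: (allP Hall p Hp) => [|/negP H]; first by rewrite /p nth_vert // HvF.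
apply: H.
apply/allP => y; rewrite mem_iota => /andP[_ Hy].
rewrite !nth_vert //; case: eqP => //= Hyx; apply/negP => /andP[HyF HyS].
have : vert m y \in S :&: F by rewrite inE HyS HyF.
by rewrite HSF inE => /eqP/(vert_inj Hy Hx).
Qed.

Lemma zir_upper S : ZIr_set (@H_adj k) S -> #|S| <= 2 * k.
Proof.
move=> HS; rewrite -(leq_pmul2l (isT : 0 < 2)) mulnA.
have -> : 2 * #|S| = \sum_(m < k) (count id (bits S m) + count id (bits S (ordS m))).
  have EQ : \sum_(m < k) count id (bits S (ordS m)) = \sum_(m < k) count id (bits S m).
    by rewrite [RHS](reindex_inj (@ordS_inj k)).
  rewrite big_split /= EQ -card_bits.
  by rewrite mul2n -addnn.
have -> : 2 * 2 * k = \sum_(m < k) 4 by rewrite sum_nat_const card_ord mulnC.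
by apply: leq_sum => m _; apply: zir_pair.
Qed.
End H.


Definition pbd := [:: false; true; false; true; false].
Definition pbce := [:: false; true; true; false; true].
Definition pacd := [:: true; false; true; true; false].
Definition pace := [:: true; false; true; false; true].

Lemma pats_ok1 : all (fun ab => lfort pbce ab.1 ab.2) ABs. Proof. by vm_compute. Qed.
Lemma pats_ok2 : all (fun ab => lfort pacd ab.1 ab.2) ABs. Proof. by vm_compute. Qed.
Lemma pats_ok3 : all (fun ab => lfort pace ab.1 ab.2) ABs. Proof. by vm_compute. Qed.

Section H.
Variable k : nat.
Hypothesis hk : 1 < k.
Notation V := (H_vertex k).

Definition S1 : {set V} := mkset (fun _ => pbd).

Lemma card_S1 : #|S1| = 2 * k.
Proof. by rewrite card_mkset // sum_nat_const card_ord mulnC. Qed.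

Definition PF (i : 'I_k) (j : 'I_5) (m : 'I_k) :=
  if m == i then (if j == o1 then pbce else pacd) else pace.

Lemma PF_fort i j : fort (@H_adj k) (mkset (PF i j)).
Proof.
apply: local_fort.
  by apply/set0Pn; exists (i, o2); rewrite inE /PF eqxx; case: (j == o1).
move=> m; rewrite bits_mkset; last by rewrite /PF; case: (m == i); case: (j == o1).
have H1 := pats_ok1; have H2 := pats_ok2; have H3 := pats_ok3.
rewrite /PF; case: (m == i); [case: (j == o1)|];
  by apply: (@abs_check (fun s a b => lfort s a b)).
Qed.

Lemma S1_zir : ZIr_set (@H_adj k) S1.
Proof.
apply/forall_inP => -[i j] Hx; apply/existsP; exists (mkset (PF i j)).
rewrite /private_fort PF_fort /=; apply/eqP/setP => -[m j']; rewrite !inE /= /PF xpair_eqE.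
move: Hx; rewrite inE /=.
case: (m == i) => /=; last first.
  by case: j' => [[|[|[|[|[|]]]]] ?].
by case: j => [[|[|[|[|[|]]]]] ?] //= _; case: j' => [[|[|[|[|[|]]]]] ?].
Qed.

Lemma ZIR_eq : ZIR (@H_adj k) = 2 * k.
Proof.
apply/eqP; rewrite eqn_leq; apply/andP; split.
  by apply/bigmax_leqP => S /maxsetp HS; apply: zir_upper.
rewrite -card_S1; apply: (leq_bigmax_cond S1).
apply/maxsetP; split; first exact: S1_zir.
move=> B HB Hsub; apply/eqP; rewrite eq_sym eqEcard Hsub /= card_S1.
exact: zir_upper.
Qed.
End H.


Definition pbde := [:: false; true; false; true; true].
Definition pzero := [:: false; false; false; false; false].
Lemma pbde_ok : lfort pbde false false. Proof. by vm_compute. Qed.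
Lemma pzero_ok : lfort pzero false false. Proof. by vm_compute. Qed.

Lemma nth_count (t : seq bool) j : nth false t j -> 0 < count id t.
Proof.
case: (ltnP j (size t)) => Hj; last by rewrite nth_default.
by move=> H; rewrite -has_count; apply/hasP; exists (nth false t j) => //; apply: mem_nth.
Qed.

Lemma hitB_count t : hitB t -> 0 < count id t.
Proof. by case/or3P; apply: nth_count. Qed.

Arguments pat : simpl never.
Arguments validpat : simpl never.

Lemma lfort_tt p (a b : bool) : a -> b -> lfort p true true -> lfort p a b.
Proof. by move=> -> ->. Qed.

Lemma vp1 t p : validpat t p -> count id t = 1 ->
  [&& nth false p 0, nth false p 2 & all (fun ab => lfort p ab.1 ab.2) ABs].
Proof. by case/and5P => _ _ _ H _ E; move: H; rewrite E; case/orP. Qed.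
Lemma vp2 t p : validpat t p -> count id t = 2 -> lfort p true true.
Proof. by case/and5P => _ _ _ _ H E; move: H; rewrite E; case/orP. Qed.
Lemma vpsize t p : validpat t p -> size p = 5.
Proof. by case/and5P => /eqP. Qed.
Lemma vphas t p : validpat t p -> has id p.
Proof. by case/and5P. Qed.
Lemma vpdisj t p (j : 'I_5) : validpat t p -> ~~ (nth false p j && nth false t j).
Proof. by case/and5P => _ /iota5P/(_ j). Qed.

Section H.
Variable k : nat.
Hypothesis hk : 1 < k.
Notation V := (H_vertex k).
Implicit Types (F S B : {set V}).

Lemma step_pres F B (B' : {set V}) : fort (@H_adj k) F -> force_step (@H_adj k) B B' ->
  B :&: F = set0 -> B' :&: F = set0.
Proof.
move=> /andP[_ /forallP HF] /existsP[u /existsP[w /and4P[Hu Hw /eqP Hn /eqP ->]]] HBF.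
case HwF: (w \in F); last first.
  by apply/setP => y; rewrite !inE; case: eqP => [->|_]; rewrite ?HwF //= -in_setI HBF inE.
have HuF : u \notin F.
  apply/negP => HuF; have : u \in B :&: F by rewrite inE Hu HuF.
  by rewrite HBF inE.
have := HF u; rewrite HuF /= => /negP H; exfalso; apply: H; apply/cards1P; exists w.
apply/setP => y; rewrite !inE; apply/andP/eqP => [[Hy HyF]|->].
  have : y \in nbhd (@H_adj k) u :&: ~: B.
    rewrite !inE Hy /=; apply/negP => HyB; have : y \in B :&: F by rewrite inE HyB HyF.
    by rewrite HBF inE.
  by rewrite Hn inE => /eqP.
split => //; have : w \in [set w] by rewrite inE.
by rewrite -Hn !inE => /andP[].
Qed.

Lemma zf_meets S F : zero_forcing_set (@H_adj k) S -> fort (@H_adj k) F -> S :&: F != set0.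
Proof.
move=> /connectP[p Hp Hl] HF; apply/negP => /eqP HSF.
have : last S p :&: F = set0.
  elim: p S Hp {Hl} HSF => [|B p IH] S //= /andP[HSB Hp] HSF.
  by apply: IH => //; apply: step_pres HSF.
rewrite -Hl setTI => HF0; by move: HF; rewrite /fort HF0 eqxx.
Qed.

Lemma fort_avoid S : #|S| <= k.+1 -> exists F, fort (@H_adj k) F && (S :&: F == set0).
Proof.
move=> HS.
have i0 : 'I_k by exists 0; apply: ltnW.
case: (boolP [exists i, ~~ hitB (bits S i)]) => [/existsP[i Hi]|].
  exists (mkset (fun m => if m == i then pbde else pzero)); apply/andP; split.
    apply: local_fort.
      by apply/set0Pn; exists (i, o1); rewrite inE eqxx.
    move=> m; rewrite bits_mkset ?alF_mkset ?beF_mkset; last by case: (m == i).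
    have -> : nth false (if ord_pred m == i then pbde else pzero) 2 = false by case: (_ == i).
    have -> : nth false (if ordS m == i then pbde else pzero) 0 = false by case: (_ == i).
    by case: (m == i); [exact: pbde_ok | exact: pzero_ok].
  apply/eqP/setP => -[m j]; rewrite !inE /=; case: eqP => [->|_]; last first.
    by case: j => [[|[|[|[|[|]]]]] ?]; rewrite /= ?andbF.
  rewrite -(nth_bits S i j); move: Hi; rewrite /hitB.
  by case: j => [[|[|[|[|[|]]]]] ?] //=; rewrite ?andbF ?andbT //; case: (nth false _ 1);
    case: (nth false _ 3); case: (nth false _ 4).
rewrite negb_exists => /forallP Hall.
set c := fun m => count id (bits S m).
have Hc1 m : 0 < c m by apply: hitB_count; move: (Hall m); rewrite negbK.
have Hsum : \sum_(m < k) (c m).-1 <= 1.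
  have : \sum_(m < k) c m <= k.+1 by rewrite -card_bits.
  have -> : \sum_(m < k) c m = \sum_(m < k) ((c m).-1 + 1) by apply: eq_bigr => m _; rewrite addn1 prednK.
  rewrite big_split /= sum_nat_const card_ord muln1.
  by rewrite -addn1 addnC leq_add2l.
have Hle m : c m <= 2.
  have : (c m).-1 <= 1 by apply: leq_trans Hsum; rewrite (bigD1 m) //= leq_addr.
  by rewrite -ltnS prednK.
have Hnb m j : m != j -> c m = 2 -> c j = 1.
  move=> Hmj Hm; have : (c m).-1 + (c j).-1 <= 1.
    apply: leq_trans Hsum; rewrite (bigD1 m) //= (bigD1 j) /= ?addnA ?leq_addr //.
    by rewrite eq_sym.
  rewrite Hm; move: (Hc1 j); case: (c j) => [|[|]] //.
have Hv m : validpat (bits S m) (pat (bits S m)).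
  have := allbitsP checkZf_ok (size_bits S m).
  move: (Hall m); rewrite negbK => ->; rewrite ltnNge Hle /=; by [].
have Hnb1 m : c m = 2 -> c (ord_pred m) = 1 /\ c (ordS m) = 1.
  move=> Hm; split; apply: (Hnb m) => //.
    by apply/negP => /eqP E; move: (ordS_neq hk (ord_pred m)); rewrite ord_predK -E eqxx.
  by rewrite eq_sym ordS_neq.
have Hsz m : size (pat (bits S m)) = 5 by apply: vpsize (Hv m).
exists (mkset (fun m => pat (bits S m))); apply/andP; split.
  apply: local_fort.
    case/(has_nthP false): (vphas (Hv i0)) => j Hj Hnj.
    rewrite Hsz in Hj.
    by apply/set0Pn; exists (i0, Ordinal Hj); rewrite inE; exact: Hnj.
  move=> m; rewrite bits_mkset // alF_mkset beF_mkset.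
  move: (Hc1 m) (Hle m) (@vp1 _ _ (Hv m)) (@vp2 _ _ (Hv m)); rewrite -/(c m).
  case Ecm: (c m) => [|[|[|]]] // _ _ H1 H2.
    case/and3P: (H1 erefl) => _ _ H1'.
    by apply: (@abs_check (fun s a b => lfort s a b)).
  have [Hp Hs] := Hnb1 m Ecm.
  case/and3P: (vp1 (Hv (ord_pred m)) Hp) => _ Ha _.
  case/and3P: (vp1 (Hv (ordS m)) Hs) => Hb _ _.
  exact: (lfort_tt Ha Hb (H2 erefl)).
apply/eqP/setP => -[m j]; rewrite !inE /= -(nth_bits S m j).
move: (vpdisj j (Hv m)).
by case: (nth false (bits S m) j); case: (nth false (pat _) j).
Qed.
End H.


Lemma S4 : ordS o4 = o0. Proof. exact: val_inj. Qed.
Lemma S3 : ordS o3 = o4. Proof. exact: val_inj. Qed.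
Lemma S2 : ordS o2 = o3. Proof. exact: val_inj. Qed.
Lemma S0 : ordS o0 = o1. Proof. exact: val_inj. Qed.
Lemma P4 : ord_pred o4 = o3. Proof. exact: val_inj. Qed.
Lemma P3 : ord_pred o3 = o2. Proof. exact: val_inj. Qed.
Lemma P2 : ord_pred o2 = o1. Proof. exact: val_inj. Qed.
Lemma P0 : ord_pred o0 = o4. Proof. exact: val_inj. Qed.

Section H.
Variable k : nat.
Notation V := (H_vertex k).
Implicit Types (F S B : {set V}).

Lemma force1 B (u w : V) : u \in B -> w \notin B -> H_adj u w ->
  #|nbhd (@H_adj k) u :&: ~: B| = 1 -> force_step (@H_adj k) B (w |: B).
Proof.
move=> Hu Hw Huw /eqP/cards1P[z Hz]; apply/existsP; exists u; apply/existsP; exists w.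
rewrite Hu Hw eqxx andbT /= Hz; apply/eqP; congr [set _].
have : w \in nbhd (@H_adj k) u :&: ~: B by rewrite !inE Huw.
by rewrite Hz inE => /eqP.
Qed.

Lemma Zf_lower : 1 < k -> k + 2 <= Zf (@H_adj k).
Proof.
move=> hk; apply: bigmin_geq.
  by rewrite cardV; lia.

move=> S HS; rewrite leqNgt; apply/negP => HS'.
have HSk : #|S| <= k.+1 by lia.
have [F /andP[HF /eqP HSF]] := fort_avoid hk HSk.
by move: (zf_meets HS HF); rewrite HSF eqxx.
Qed.
End H.


Definition pall := [:: true; true; true; true; true].
Definition pb0 := [:: true; true; false; false; true].
Definition pb := [:: false; true; false; false; false].

Section H.
Variable n : nat.
Notation k := n.+2.
Notation V := (H_vertex k).
Implicit Types (F S B : {set V}).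

Definition Wp (m : nat) (x : 'I_k) := if nat_of_ord x < m then pall else if nat_of_ord x == 0 then pb0 else pb.
Definition W m := mkset (Wp m).

Lemma Wp_size m x : size (Wp m x) = 5.
Proof. by rewrite /Wp; case: ifP => //; case: ifP. Qed.

Lemma card_W0 : #|W 0| = k + 2.
Proof.
rewrite card_mkset; last exact: Wp_size.
rewrite (bigD1 ord0) //= (eq_bigr (fun _ => 1)); last first.
  by move=> x Hx; rewrite /Wp ltn0; have -> : (val x == 0) = false by move: Hx; rewrite -(inj_eq val_inj) => /negbTE.
by rewrite sum1_card cardC1 card_ord /Wp /=; lia.
Qed.

Lemma W_full : W k = setT.
Proof. by apply/setP => -[x j]; rewrite !inE /Wp ltn_ord; case: j => [[|[|[|[|[|]]]]] ?]. Qed.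

Lemma step_row m : 0 < m < k -> connect (force_step (@H_adj k)) (W m) (W m.+1).
Proof.
case/andP => Hm0 Hmk.
set i : 'I_k := inord m; set ip : 'I_k := inord m.-1.
have Hi : nat_of_ord i = m by rewrite inordK.
have Hip : nat_of_ord ip = m.-1 by rewrite inordK //; lia.
have HSip : ordS ip = i.
  by apply: val_inj; rewrite /= Hip Hi prednK // modn_small.
have HPi : ord_pred i = ip by rewrite -HSip ordSK.
have Hne : (ip == i) = false.
  by apply/eqP => E; move: (f_equal (@nat_of_ord _) E); rewrite Hi Hip; lia.
have Hne' : (i == ip) = false by rewrite eq_sym.
have Wi : Wp m i = pb.
  rewrite /Wp Hi ltnn; have -> : (m == 0) = false by lia.
  by [].
have Wip : Wp m ip = pall by rewrite /Wp Hip; have -> : m.-1 < m by lia.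
have Wi' : Wp m.+1 i = pall by rewrite /Wp Hi ltnSn.
have Wx x : x != i -> Wp m.+1 x = Wp m x.
  move=> Hx; rewrite /Wp; have -> : (x < m.+1) = (x < m) => //.
  have : nat_of_ord x != m by apply: contra Hx => /eqP E; apply/eqP/val_inj; rewrite /= E Hi.
  lia.
have E1 : force_step (@H_adj k) (W m) ((i, o0) |: W m).
  apply: (@force1 _ _ (ip, o2)).
  - by rewrite inE /= Wip.
  - by rewrite inE /= Wi.
  - by rewrite adjE /= HSip eqxx !orbT.
  by rewrite cntE /= S2 P2 HSip !inE /= Wip Wi /pall /pb.
set B1 := (i, o0) |: W m.
have E2 : force_step (@H_adj k) B1 ((i, o4) |: B1).
  apply: (@force1 _ _ (i, o0)).
  - by rewrite !inE eqxx.
  - by rewrite !inE /= !xpair_eqE /= eqxx Wi /pb.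
  - by rewrite adjE /= P0 eqxx !orbT.
  by rewrite cntE /= S0 P0 HPi !inE /= !xpair_eqE /= ?eqxx ?Hne /= Wi Wip /pall /pb.
set B2 := (i, o4) |: B1.
have E3 : force_step (@H_adj k) B2 ((i, o3) |: B2).
  apply: (@force1 _ _ (i, o4)).
  - by rewrite !inE eqxx.
  - by rewrite !inE /= !xpair_eqE /= eqxx Wi /pb.
  - by rewrite adjE /= P4 eqxx !orbT.
  by rewrite cntE /= S4 P4 !inE /= !xpair_eqE /= ?eqxx /= Wi /pall /pb.
set B3 := (i, o3) |: B2.
have E4 : force_step (@H_adj k) B3 ((i, o2) |: B3).
  apply: (@force1 _ _ (i, o3)).
  - by rewrite !inE eqxx.
  - by rewrite !inE /= !xpair_eqE /= eqxx Wi /pb.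
  - by rewrite adjE /= P3 eqxx !orbT.
  by rewrite cntE /= S3 P3 !inE /= !xpair_eqE /= ?eqxx /= Wi /pall /pb.
have -> : W m.+1 = (i, o2) |: B3.
  apply/setP => -[x j]; rewrite !inE /= !xpair_eqE.
  case: (eqVneq x i) => [->|Hx]; first rewrite Wi' Wi.
    by case: j => [[|[|[|[|[|]]]]] ?].
  by rewrite Wx // (negbTE Hx).
apply: (connect_trans (connect1 E1)); apply: (connect_trans (connect1 E2)).
apply: (connect_trans (connect1 E3)); exact: (connect1 E4).
Qed.

Lemma step_base : connect (force_step (@H_adj k)) (W 0) (W 1).
Proof.
set i := (ord0 : 'I_k).
have Wi : Wp 0 i = pb0 by [].
have Wi' : Wp 1 i = pall by [].
have Wx x : x != i -> Wp 1 x = Wp 0 x.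
  move=> Hx; rewrite /Wp; have -> : (nat_of_ord x < 1) = false => //.
  by move: Hx; rewrite -(inj_eq val_inj) /=; case: (nat_of_ord x).
have E1 : force_step (@H_adj k) (W 0) ((i, o3) |: W 0).
  apply: (@force1 _ _ (i, o4)).
  - by rewrite inE.
  - by rewrite inE.
  - by rewrite adjE /= ?P4 ?eqxx ?orbT.
  by rewrite cntE /= ?S4 ?P4 !inE.
set B1 := (i, o3) |: W 0.
have E2 : force_step (@H_adj k) B1 ((i, o2) |: B1).
  apply: (@force1 _ _ (i, o3)).
  - by rewrite !inE eqxx.
  - by rewrite !inE.
  - by rewrite adjE /= ?P3 ?eqxx ?orbT.
  by rewrite cntE /= ?S3 ?P3 !inE.
have -> : W 1 = (i, o2) |: B1.
  apply/setP => -[x j]; rewrite !inE /= !xpair_eqE.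
  case: (eqVneq x i) => [->|Hx]; first rewrite Wi' Wi.
    by case: j => [[|[|[|[|[|]]]]] ?].
  by rewrite Wx // (negbTE Hx).
apply: (connect_trans (connect1 E1)); exact: (connect1 E2).
Qed.

Lemma chain m : 0 < m <= k -> connect (force_step (@H_adj k)) (W 0) (W m).
Proof.
elim: m => [|m IH] // /andP[_ Hm].
case: m IH Hm => [|m] IH Hm; first exact: step_base.
apply: connect_trans (IH _) (step_row _); lia.
Qed.

Lemma Zf_upper : Zf (@H_adj k) <= k + 2.
Proof.
rewrite -card_W0; apply: bigmin_leq.
by rewrite /zero_forcing_set -W_full; apply: chain; rewrite leqnn.
Qed.
End H.


Theorem theorem4p8 (k : nat) (hk : 2 <= k) :
  let n := #|{: H_vertex k}| in
  n = 5 * k /\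
  min_degree (@H_adj k) = 2 /\
  5 * gamma2 (@H_adj k) = 3 * n /\
  5 * ZIR (@H_adj k) = 2 * n /\
  ZIR (@H_adj k) = n - gamma2 (@H_adj k) /\
  Zf (@H_adj k) = k + 2.
Proof.
have HV := cardV k.
have G2 : gamma2 (@H_adj k) = 3 * k.
  apply/eqP; rewrite eqn_leq; apply/andP; split.
    by case: (g2_upper_set k) => D HD <-; apply: bigmin_leq HD.
  apply: bigmin_geq; first by rewrite HV; lia.
  by move=> D; apply: g2_lower.
have MD : min_degree (@H_adj k) = 2.
  apply/eqP; rewrite eqn_leq; apply/andP; split.
    have i0 : 'I_k by exists 0; lia.
    apply: (@leq_trans #|nbhd (@H_adj k) (i0, o1)|); last by rewrite deg_b.
    exact: (bigmin_leq (P := fun _ => true)).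
  apply: bigmin_geq; first by rewrite HV; lia.
  by move=> v _; apply: deg2.
have ZI := ZIR_eq hk.
have ZF : Zf (@H_adj k) = k + 2.
  apply/eqP; rewrite eqn_leq Zf_lower // andbT.
  by case: k hk {HV G2 MD ZI} => [|[|n']] // _; apply: Zf_upper.
rewrite /= HV G2 ZI ZF; do !split => //; lia.
Qed.
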